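(* Let $H$ be a $d\times d$ Hermitian matrix and $1/d<t<1$. Then there exists a density operator $\rho^*$ with $\mathrm{Tr}((\rho^* )^2)=t$ that maximizes $\mathrm{Tr}(\rho H)$ over $S^t$, and any such $\rho^*$ is an optimizer of the (non-convex) problem $$\min\{\|\rho-H\|_2:\ \rho\succeq0,\ \mathrm{Tr}\rho=1,\ \mathrm{Tr}(\rho^2)=t\}.$$
   Context: $S^t=\{\rho\in\mathcal{L}(\mathbb{C}^d):\rho\succeq 0,\ \mathrm{Tr}\rho=1,\ \mathrm{Tr}(\rho^2)\le t\}$; $\|\cdot\|_2$ is the Frobenius norm. *)

(* Defs.v *)
From HB Require Import structures.
From mathcomp Require Import all_boot all_order all_algebra.
From mathcomp Require Import complex reals.
Set Implicit Arguments. Unset Strict Implicit. Unset Printing Implicit Defensive.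
Import Order.TTheory GRing.Theory Num.Theory.
Local Open Scope ring_scope.

Section Defs.
Variable R : realType.
Local Notation C := R[i].

Definition ctrmx m n (A : 'M[C]_(m, n)) : 'M[C]_(n, m) :=
  \matrix_(i, j) (A j i)^*.

Definition is_hermitian d (A : 'M[C]_d) : Prop := ctrmx A = A.

Definition is_psd d (A : 'M[C]_d) : Prop :=
  is_hermitian A /\ forall v : 'cV[C]_d, 0 <= (ctrmx v *m A *m v) 0 0.

Definition is_density d (rho : 'M[C]_d) : Prop := is_psd rho /\ \tr rho = 1.

Definition St d (t : R) (rho : 'M[C]_d) : Prop :=
  is_density rho /\ \tr (rho *m rho) <= real_complex R t.

Definition frob m n (A : 'M[C]_(m, n)) : C := sqrtC (\tr (ctrmx A *m A)).
End Defs.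

(* Main.v *)
Require Import Defs.
From HB Require Import structures.
From mathcomp Require Import all_boot all_order all_algebra.
From mathcomp Require Import complex reals.
From mathcomp Require Import boolp classical_sets topology normedtype derive.
From mathcomp Require Import ring lra.
From mathcomp Require Import sesquilinear spectral.
Import Order.TTheory GRing.Theory Num.Theory.
Import numFieldNormedType.Exports.
Local Open Scope classical_set_scope.
Local Open Scope ring_scope.

Section Classical.
Variable R : realType.

Lemma sum_cont (T : topologicalType) n (F : 'I_n -> T -> R) :
  (forall i, continuous (F i)) -> continuous (fun x => \sum_i F i x).
Proof.
move=> Fc x; rewrite /continuous_at.
elim: (index_enum _) => [|i r IHr].
  have -> : (fun x0 => \sum_(i <- [::]) F i x0) = fun=> 0.
    by apply/funext => y; rewrite big_nil.
  rewrite big_nil; exact: cvg_cst.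
have -> : (fun x0 => \sum_(j <- i :: r) F j x0) =
   (fun x0 => F i x0 + \sum_(j <- r) F j x0).
  by apply/funext => y; rewrite big_cons.
rewrite big_cons; apply: cvgD => //; exact: Fc.
Qed.


Lemma le_sum_entry n (q : 'rV[R]_n) k : (forall i, 0 <= q ord0 i) ->
  q ord0 k <= \sum_i q ord0 i.
Proof.
move=> H; rewrite (bigD1 k) //= lerDl; apply: sumr_ge0 => i _; exact: H.
Qed.

Lemma classical_opt (d : nat) (mu : 'rV[R]_d) (t : R) :
  (0 < d)%N -> d%:R^-1 <= t -> t < 1 ->
  exists p : 'rV[R]_d, [/\ (forall i, 0 <= p ord0 i), \sum_i p ord0 i = 1,
     \sum_i p ord0 i ^+ 2 = t &
     forall q : 'rV[R]_d, (forall i, 0 <= q ord0 i) -> \sum_i q ord0 i = 1 ->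
       \sum_i q ord0 i ^+ 2 <= t ->
       \sum_i q ord0 i * mu ord0 i <= \sum_i p ord0 i * mu ord0 i].
Proof.
move=> d0 tlo thi.
pose A := \bigcap_(i in setT) [set q : 'rV[R]_d | 0 <= q ord0 i] `&`
  ([set q | \sum_i q ord0 i = 1] `&` [set q | \sum_i q ord0 i ^+ 2 <= t]).
have inA q : A q <-> [/\ forall i, 0 <= q ord0 i, \sum_i q ord0 i = 1
                       & \sum_i q ord0 i ^+ 2 <= t].
  split => [[H1 [H2 H3]]|[H1 H2 H3]]; split => //.
  by move=> i; apply: H1.
  by move=> i _; apply: H1.
have dn0 : (d%:R : R) != 0 by rewrite pnatr_eq0 -lt0n.
have A0 : A !=set0.
  exists (const_mx d%:R^-1); apply/inA; split.
  - by move=> i; rewrite mxE invr_ge0 ler0n.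
  - under eq_bigr do rewrite mxE.
    by rewrite sumr_const card_ord -(mulr_natr (d%:R^-1)) mulVf.
  - under eq_bigr do rewrite mxE.
    by rewrite sumr_const card_ord -(mulr_natr (d%:R^-1 ^+ 2)) expr2 -mulrA mulVf // mulr1.
have cA : compact A.
  apply: (subclosed_compact _
     (@rV_compact R d (fun=> `[(0:R), 1]%classic) (fun=> @segment_compact _ _ _))).
  - apply: closedI; [apply: closed_bigI => i _| apply: closedI].
    + apply: (@preimage_closed _ _ (fun q : 'rV[R]_d => q ord0 i) [set x | 0 <= x]).
        by move=> ? _; exact: coord_continuous.
      exact: closed_ge.
    + apply: (@preimage_closed _ _ (fun q : 'rV[R]_d => \sum_i q ord0 i) [set x | x = 1]).
        move=> ? _; apply: sum_cont => i; exact: coord_continuous.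
      exact: closed_eq.
    + apply: (@preimage_closed _ _ (fun q : 'rV[R]_d => \sum_i q ord0 i ^+ 2) [set x | x <= t]).
        move=> ? _; apply: sum_cont => i y.
        have -> : (fun q : 'rV[R]_d => q ord0 i ^+ 2) = (fun q => q ord0 i * q ord0 i).
          by apply/funext => ?; rewrite expr2.
        exact: (continuousM (@coord_continuous _ 1 d ord0 i y) (@coord_continuous _ 1 d ord0 i y)).
      exact: closed_le.
  - move=> q /inA [H1 H2 H3] i /=; rewrite in_itv /= H1 /= -H2.
    exact: le_sum_entry.
have fc : continuous (fun q : 'rV[R]_d => \sum_i q ord0 i * mu ord0 i).
  apply: sum_cont => i y.
  by apply: continuousM; [exact: coord_continuous | exact: cst_continuous].
have [q0 /set_mem /inA [q0p q0s q0t] q0max] :=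
  compact_EVT_max A0 cA (continuous_subspaceT fc).
have q0max' (q : 'rV[R]_d) : (forall i, 0 <= q ord0 i) -> \sum_i q ord0 i = 1 ->
    \sum_i q ord0 i ^+ 2 <= t ->
    \sum_i q ord0 i * mu ord0 i <= \sum_i q0 ord0 i * mu ord0 i.
  by move=> qp qs qt; exact: (q0max q (mem_set (proj2 (inA q) (And3 qp qs qt)))).
case: (eqVneq (\sum_i q0 ord0 i ^+ 2) t) => [q0eq|q0ne].
  by exists q0; split.
have P0lt : \sum_i q0 ord0 i ^+ 2 < t by rewrite lt_neqAle q0ne q0t.
move: P0lt q0max'.
set P0 := \sum_i q0 ord0 i ^+ 2.
set L := \sum_i q0 ord0 i * mu ord0 i => P0lt q0max'.
pose i0 := Ordinal d0.
have [k _ kmax] := @arg_maxP _ _ 'I_d i0 xpredT (fun i => mu ord0 i) isT.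
pose qs (r : R) : 'rV[R]_d := \row_j ((1 - r) * q0 ord0 j + r * (j == k)%:R).
have qsE r j : qs r ord0 j = (1 - r) * q0 ord0 j + r * (j == k)%:R by rewrite mxE.
have qs_nn r j : 0 <= r <= 1 -> 0 <= qs r ord0 j.
  case/andP => r0 r1; rewrite qsE; apply: addr_ge0; apply: mulr_ge0 => //.
  by rewrite subr_ge0.
have qs_sum r : \sum_j qs r ord0 j = 1.
  under eq_bigr do rewrite qsE.
  rewrite big_split /= -!mulr_sumr q0s (bigD1 k) //= eqxx big1 => [|j /negbTE -> //].
  by rewrite addr0 !mulr1 subrK.
have qs_lin r : \sum_j qs r ord0 j * mu ord0 j = (1 - r) * L + r * mu ord0 k.
  under eq_bigr do rewrite qsE mulrDl -!mulrA.
  rewrite big_split /= -!mulr_sumr [X in r * X](bigD1 k) //= eqxx [X in r * (_ + X)]big1 => [|j /negbTE ->]; last first.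
    by rewrite mul0r.
  by rewrite addr0 mul1r.
have P0E : P0 = q0 ord0 k ^+ 2 + \sum_(j | j != k) q0 ord0 j ^+ 2.
  by rewrite /P0 (bigD1 k).
have qs_sq r : \sum_j qs r ord0 j ^+ 2 =
    (1 - r) ^+ 2 * P0 + 2 * r * (1 - r) * q0 ord0 k + r ^+ 2.
  under eq_bigr do rewrite qsE.
  rewrite (bigD1 k) //= eqxx.
  rewrite (eq_bigr (fun j => (1 - r) ^+ 2 * q0 ord0 j ^+ 2)) => [|j /negbTE ->]; last first.
    by rewrite mulr0 addr0 exprMn.
  rewrite -mulr_sumr P0E mulr1; ring.
have q0k2 : q0 ord0 k ^+ 2 <= P0.
  by rewrite P0E lerDl; apply: sumr_ge0 => j _; exact: sqr_ge0.
have q0k1 : q0 ord0 k <= 1 by rewrite -q0s le_sum_entry.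
have q0k0 : 0 <= q0 ord0 k := q0p k.
have Lk : L <= mu ord0 k.
  rewrite /L (@le_trans _ _ (\sum_i q0 ord0 i * mu ord0 k)) //.
    by apply: ler_sum => j _; apply: ler_wpM2l => //; exact: kmax.
  by rewrite -mulr_suml q0s mul1r.
have P0lt1 : P0 < 1 by apply: lt_trans thi.
pose s := (t - P0) / (1 - P0).
have hs : s * (1 - P0) = t - P0 by rewrite /s mulfVK // subr_eq0 gt_eqF.
have s0 : 0 < s by rewrite /s divr_gt0 // subr_gt0.
have s1 : s < 1 by rewrite /s ltr_pdivrMr ?subr_gt0 // mul1r ltrD2r.
have s01 : 0 <= s <= 1 by rewrite (ltW s0) (ltW s1).
have kL : mu ord0 k <= L.
  have := q0max' (qs s) (fun j => qs_nn s j s01) (qs_sum s).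
  rewrite qs_lin qs_sq.
  have h1 : 0 <= s * (1 - s) by rewrite mulr_ge0 // ?subr_ge0 // ltW.
  have h2 : 0 <= P0 + 1 - 2 * q0 ord0 k by nra.
  have h3 := mulr_ge0 h1 h2.
  have -> : (1 - s) ^+ 2 * P0 + 2 * s * (1 - s) * q0 ord0 k + s ^+ 2 <= t.
    by nra.
  move=> /(_ isT) h; nra.
have LE : L = mu ord0 k by apply/le_anti; rewrite Lk kL.
pose gp : {poly R} := P0%:P * ((1 - 'X) * (1 - 'X)) + (2 * q0 ord0 k)%:P * 'X * (1 - 'X) + 'X * 'X.
have gE r : gp.[r] = (1 - r) ^+ 2 * P0 + 2 * r * (1 - r) * q0 ord0 k + r ^+ 2.
  by rewrite !hornerE /=; ring.
have [r r01 gr] : exists2 r, r \in `[0, 1] & gp.[r] = t.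
  apply: (@IVT R (horner gp) 0 1 t ler01).
    by apply: continuous_subspaceT => x; exact: continuous_horner.
  rewrite !gE.
  have -> : (1 - 0) ^+ 2 * P0 + 2 * 0 * (1 - 0) * q0 ord0 k + 0 ^+ 2 = P0 by ring.
  have -> : (1 - 1) ^+ 2 * P0 + 2 * 1 * (1 - 1) * q0 ord0 k + 1 ^+ 2 = 1 :> R by ring.
  by rewrite min_l ?max_r ?(ltW P0lt1) // (ltW P0lt) (ltW thi).
have r01' : 0 <= r <= 1 by move: r01; rewrite in_itv.
exists (qs r); split => //.
- by move=> j; exact: qs_nn.
- by rewrite qs_sq -gE.
- move=> q qp qs1 qt; rewrite qs_lin -LE.
  have -> : (1 - r) * L + r * L = L by ring.
  exact: q0max'.
Qed.

End Classical.

Section Mat.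
Variable R : realType.
Local Notation C := R[i].

Lemma ctrmxE m n (A : 'M[C]_(m, n)) : ctrmx A = map_mx Num.conj A^T.
Proof. by apply/matrixP => i j; rewrite !mxE. Qed.

Lemma ctrmx_mul m n p (A : 'M[C]_(m, n)) (B : 'M[C]_(n, p)) :
  ctrmx (A *m B) = ctrmx B *m ctrmx A.
Proof. by rewrite !ctrmxE trmx_mul map_mxM. Qed.

Lemma ctrmxK m n (A : 'M[C]_(m, n)) : ctrmx (ctrmx A) = A.
Proof. by apply/matrixP => i j; rewrite !mxE conjCK. Qed.

Lemma ctrmxB m n (A B : 'M[C]_(m, n)) : ctrmx (A - B) = ctrmx A - ctrmx B.
Proof. by apply/matrixP => i j; rewrite !mxE rmorphB. Qed.

Lemma tr_ctrmx_ge0 m n (A : 'M[C]_(m, n)) : 0 <= \tr (ctrmx A *m A).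
Proof.
rewrite /mxtrace; apply: sumr_ge0 => i _; rewrite mxE; apply: sumr_ge0 => k _.
by rewrite mxE mulrC mul_conjC_ge0.
Qed.

Lemma frob_sqE n (X H : 'M[C]_n) : ctrmx X = X -> ctrmx H = H ->
  \tr (ctrmx (X - H) *m (X - H)) =
  \tr (X *m X) - 2%:R * \tr (X *m H) + \tr (H *m H).
Proof.
move=> hX hH; rewrite ctrmxB hX hH mulmxBl !mulmxBr !raddfB /=.
rewrite [\tr (H *m X)]mxtrace_mulC; ring.
Qed.

Lemma entry_quad n (U S : 'M[C]_n) i :
  (ctrmx (col i (ctrmx U)) *m S *m col i (ctrmx U)) 0 0 =
  (U *m S *m ctrmx U) i i.
Proof.
have -> : ctrmx (col i (ctrmx U)) = row i U.
  by apply/matrixP => a b; rewrite !mxE conjCK.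
rewrite -row_mul !mxE; apply: eq_bigr => k _; rewrite !mxE.
by [].
Qed.


Lemma rC_sum (I : finType) (f : I -> R) : real_complex R (\sum_i f i) = \sum_i real_complex R (f i).
Proof. by rewrite rmorph_sum. Qed.

Lemma one_C : (1 : C) = real_complex R 1.
Proof. by []. Qed.

End Mat.

Theorem mainTheorem5 (R : realType) (d : nat) (H : 'M[R[i]]_d) (t : R) :
  (0 < d)%N -> is_hermitian H -> (d%:R)^-1 < t -> t < 1 ->
  (exists rho : 'M[R[i]]_d,
      St t rho /\ \tr (rho *m rho) = real_complex R t /\
      (forall sigma, St t sigma -> \tr (sigma *m H) <= \tr (rho *m H)))
  /\
  (forall rho : 'M[R[i]]_d,
      St t rho -> \tr (rho *m rho) = real_complex R t ->
      (forall sigma, St t sigma -> \tr (sigma *m H) <= \tr (rho *m H)) ->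
      (is_psd rho /\ \tr rho = 1 /\ \tr (rho *m rho) = real_complex R t) /\
      (forall sigma : 'M[R[i]]_d,
          is_psd sigma -> \tr sigma = 1 -> \tr (sigma *m sigma) = real_complex R t ->
          frob (rho - H) <= frob (sigma - H))).
Proof.
move=> d0 Hh tlo thi.
split; last first.
  move=> rho [[rp r1] rt] rhoeq rmax; split; first by [].
  move=> sigma sp s1 ss.
  rewrite /frob ler_sqrtC ?nnegrE ?tr_ctrmx_ge0 //.
  rewrite (@frob_sqE R d rho H (proj1 rp) Hh) (@frob_sqE R d sigma H (proj1 sp) Hh).
  rewrite rhoeq ss lerD2r lerD2l lerN2.
  apply: ler_wpM2l; first exact: ler0n.
  apply: rmax; split; [by split | by rewrite ss].
have Hherm : H \is hermsymmx.
  apply/is_hermitianmxP; rewrite expr0 scale1r.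
  apply/matrixP => i j; rewrite !mxE.
  by rewrite -[in LHS]Hh mxE.
pose U := spectralmx H; pose lam := spectral_diag H.
have Uu : U \is unitarymx := spectral_unitarymx H.
have UUt : U *m ctrmx U = 1%:M by rewrite ctrmxE; exact/unitarymxP.
have UtU : ctrmx U *m U = 1%:M.
  have : map_mx Num.conj U^T \is unitarymx by rewrite trmxC_unitary.
  by move/unitarymxP; rewrite trmxCK -ctrmxE.
have HE : H = ctrmx U *m diag_mx lam *m U.
  have /orthomx_spectralP := hermitian_normalmx Hherm.
  by rewrite invmx_unitary // ctrmxE.
have lamR i : lam 0 i = real_complex R (complex.Re (lam 0 i)).
  have /mxOverP h := hermitian_spectral_diag_real Hherm.
  by rewrite RRe_real //; exact: h.
pose mu := \row_i complex.Re (lam 0 i).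
pose tau (S : 'M[R[i]]_d) := U *m S *m ctrmx U.
have tr_tau S : \tr (tau S) = \tr S.
  by rewrite /tau mxtrace_mulC mulmxA UtU mul1mx.
have trH S : \tr (S *m H) = \sum_i tau S i i * lam 0 i.
  rewrite HE !mulmxA mxtrace_mulC !mulmxA -/(tau S) mul_mx_diag /mxtrace.
  by apply: eq_bigr => i _; rewrite mxE.
have trSS S : \tr (S *m S) = \tr (tau S *m tau S).
  rewrite -[in LHS](tr_tau (S *m S)) /tau; congr (\tr _).
  by rewrite !mulmxA -(mulmxA (U *m S) (ctrmx U) U) UtU mulmx1.
have tau_psd S i : is_psd S -> 0 <= tau S i i.
  by move=> [_ h]; rewrite /tau -entry_quad; exact: h.
have tau_herm S : is_hermitian S -> forall i j, tau S j i = (tau S i j)^*.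
  move=> Sh i j.
  have : ctrmx (tau S) = tau S by rewrite /tau !ctrmx_mul ctrmxK Sh mulmxA.
  by move/matrixP/(_ i j); rewrite mxE => <-; rewrite conjCK.
have sq_le S : is_hermitian S -> \sum_i tau S i i * tau S i i <= \tr (S *m S).
  move=> Sh; rewrite trSS /mxtrace; apply: ler_sum => i _.
  rewrite [(tau S *m tau S) i i]mxE [X in _ <= X](bigD1 i) //= lerDl; apply: sumr_ge0 => j _.
  by rewrite (tau_herm S Sh i j) mul_conjC_ge0.
pose qv S : 'rV[R]_d := \row_i complex.Re (tau S i i).
have qvE S i : is_psd S -> tau S i i = real_complex R (qv S 0 i).
  by move=> Sp; rewrite [qv S 0 i]mxE RRe_real // ger0_real // tau_psd.
have qv_ge0 S i : is_psd S -> 0 <= qv S 0 i.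
  by move=> Sp; rewrite -lecR -qvE // tau_psd.
have qv_sum S : is_density S -> \sum_i qv S 0 i = 1.
  move=> [Sp S1]; apply: complexI; rewrite rC_sum -one_C -S1 -tr_tau /mxtrace.
  by apply: eq_bigr => i _; rewrite qvE.
have qv_sq S : is_psd S -> real_complex R (\sum_i qv S 0 i ^+ 2) <= \tr (S *m S).
  move=> Sp; apply: le_trans (sq_le S Sp.1); rewrite rC_sum le_eqVlt; apply/orP; left.
  by apply/eqP/eq_bigr => i _; rewrite qvE // expr2 rmorphM.
have qv_H S : is_psd S -> \tr (S *m H) = real_complex R (\sum_i qv S 0 i * mu 0 i).
  move=> Sp; rewrite trH rC_sum; apply: eq_bigr => i _.
  by rewrite qvE // [mu 0 i]mxE {1}lamR; symmetry; exact: rmorphM.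
have [p [pp p1 pt pmax]] := @classical_opt R d mu t d0 (ltW tlo) thi.
pose pc : 'rV[R[i]]_d := \row_i real_complex R (p ord0 i).
pose P := diag_mx pc.
have pcE i : pc 0 i = real_complex R (p ord0 i) by rewrite mxE.
have pcR i : (pc 0 i)^* = pc 0 i.
  by rewrite conj_Creal // ger0_real // pcE lecR.
pose rho := ctrmx U *m P *m U.
have tau_rho : tau rho = P.
  by rewrite /tau /rho !mulmxA UUt mul1mx -mulmxA UUt mulmx1.
have Pc : ctrmx P = P.
  apply/matrixP => i j; rewrite !mxE eq_sym.
  by case: eqP => [->|_]; rewrite ?mulr1n ?mulr0n ?conjC0 // -pcE pcR.
have rho_herm : is_hermitian rho.
  by rewrite /is_hermitian /rho !ctrmx_mul ctrmxK Pc mulmxA.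
have rho_psd : is_psd rho.
  split => // v.
  pose w := U *m v.
  have -> : ctrmx v *m rho *m v = ctrmx w *m P *m w.
    by rewrite /w /rho ctrmx_mul !mulmxA.
  rewrite mxE; apply: sumr_ge0 => j _; rewrite mul_mx_diag !mxE mulrAC.
  apply: mulr_ge0; first by rewrite mulrC mul_conjC_ge0.
  by rewrite lecR.
have rho_tr : \tr rho = 1.
  rewrite -tr_tau tau_rho mxtrace_diag one_C -p1 rC_sum.
  by apply: eq_bigr => i _; rewrite pcE.
have rho_sq : \tr (rho *m rho) = real_complex R t.
  rewrite trSS tau_rho mulmx_diag mxtrace_diag -pt rC_sum.
  by apply: eq_bigr => i _; rewrite mxE pcE expr2 rmorphM.
exists rho; split; first by split; [split|rewrite rho_sq].
split => // sigma [[sp s1] st].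
rewrite (qv_H sigma sp) (qv_H rho rho_psd) lecR.
have qrho i : qv rho 0 i = p ord0 i.
  by rewrite [qv rho 0 i]mxE tau_rho mxE eqxx mulr1n pcE.
under [X in _ <= X]eq_bigr do rewrite qrho.
apply: pmax.
- by move=> i; exact: qv_ge0.
- exact: qv_sum.
- by rewrite -lecR (le_trans (qv_sq sigma sp)).
Qed.
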